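(* Let $\mu$ be a valuated matroid on $[n]$ and let $A\in K^{n\times n}$ be a weakly monomial matrix. Then $\mathrm{val}(A)\odot\overline{\operatorname{trop}}(\mu)\subseteq\mathbb{P}(\mathbb{T}^n)$ is a tropical linear space.
   Context: $K$ is a field with non-Archimedean valuation $\mathrm{val}:K\to\mathbb{T}=\mathbb{R}\cup\{\infty\}$; $\mathbb{P}(\mathbb{T}^n)=(\mathbb{T}^n\setminus\{(\infty,\dots,\infty)\})/\mathbb{R}\mathbf{1}$; $(\mathrm{val}(A)\odot v)_i=\min_j(\mathrm{val}(A_{ij})+v_j)$, applied pointwise to sets. A matrix is weakly monomial if each row has at most one nonzero entry. Valuated matroid of rank $r$ on $[n]$: $\nu:\binom{[n]}{r}\to\mathbb{T}$, not identically $\infty$, such that for all $I,J$, $i\in I\setminus J$ there is $j\in J\setminus I$ with $\nu(I)+\nu(J)\ge\nu((I\setminus i)\cup j)+\nu((J\setminus j)\cup i)$. A tropical linear space is a set of the form $\overline{\operatorname{trop}}(\nu)$: the set of $x\in\mathbb{P}(\mathbb{T}^n)$ such that for each $I\in\binom{[n]}{r+1}$ with $C_\nu(I)\neq(\infty,\dots)$, where $C_\nu(I)_i=\nu(I\setminus i)$ for $i\in I$ and $\infty$ else, $\min_i(C_\nu(I)_i+x_i)$ is attained at least twice ($\infty$ counts as twice). *)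

(* Defs.v *)
From HB Require Import structures.
From mathcomp Require Import all_boot all_order all_algebra.
From mathcomp Require Import reals.
Set Implicit Arguments. Unset Strict Implicit. Unset Printing Implicit Defensive.
Import Order.TTheory GRing.Theory Num.Theory.
Local Open Scope ring_scope.

(* The tropical semiring T = R ∪ {∞}; [None] stands for ∞. *)
Definition trop (R : realType) := option R.

Section Trop.
Variable R : realType.

(* tropical "multiplication" = ordinary addition, ∞ absorbing *)
Definition tadd (a b : trop R) : trop R :=
  match a, b with Some x, Some y => Some (x + y) | _, _ => None end.

Definition tmin (a b : trop R) : trop R :=
  match a, b with
  | None, _ => b
  | _, None => a
  | Some x, Some y => Some (Num.min x y)
  end.

Definition tle (a b : trop R) : Prop :=
  match a, b with
  | _, None => True
  | None, Some _ => False
  | Some x, Some y => x <= y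
  end.

(* a vector of T^n different from (∞,...,∞), i.e. a representative of a
   point of P(T^n) *)
Definition tnonzero n (x : 'I_n -> trop R) : Prop := exists i, x i <> None.

(* two representatives define the same point of P(T^n) = (T^n \ {∞})/R1 *)
Definition proj_eq n (x y : 'I_n -> trop R) : Prop :=
  exists c : R, forall i, x i = tadd (Some c) (y i).

Definition nonarch_valuation (K : fieldType) (val : K -> trop R) : Prop :=
  [/\ forall a, val a = None <-> a = 0,
      forall a b, val (a * b) = tadd (val a) (val b)
    & forall a b, tle (tmin (val a) (val b)) (val (a + b))].

(* valuated matroid of rank r on [n]; nu is only relevant on r-subsets *)
Definition valuated_matroid n (r : nat) (nu : {set 'I_n} -> trop R) : Prop :=
  (exists I : {set 'I_n}, #|I| = r /\ nu I <> None) /\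
  forall I J : {set 'I_n}, #|I| = r -> #|J| = r ->
    forall i, i \in I :\: J ->
      exists2 j, j \in J :\: I &
        tle (tadd (nu ((I :\ i) :|: [set j])) (nu ((J :\ j) :|: [set i])))
            (tadd (nu I) (nu J)).

Definition circuit_vec n (nu : {set 'I_n} -> trop R) (I : {set 'I_n})
  : 'I_n -> trop R :=
  fun i => if i \in I then nu (I :\ i) else None.

(* min_i v_i is attained at least twice (∞ counts as twice) *)
Definition min_twice n (v : 'I_n -> trop R) : Prop :=
  forall i, v i <> None -> (forall j, tle (v i) (v j)) ->
    exists2 j, j != i & v j = v i.

(* closure of trop(nu), as a set of representatives in T^n \ {∞} *)
Definition trop_closure n (r : nat) (nu : {set 'I_n} -> trop R)
  (x : 'I_n -> trop R) : Prop :=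
  tnonzero x /\
  forall I : {set 'I_n}, #|I| = r.+1 ->
    (exists i, circuit_vec nu I i <> None) ->
    min_twice (fun i => tadd (circuit_vec nu I i) (x i)).

(* a subset of P(T^n), given by a predicate on nonzero representatives,
   is a tropical linear space *)
Definition tropical_linear_space n (S : ('I_n -> trop R) -> Prop) : Prop :=
  exists (r : nat) (nu : {set 'I_n} -> trop R),
    valuated_matroid r nu /\
    forall x, tnonzero x -> (S x <-> trop_closure r nu x).

Definition trop_mxv (K : fieldType) (val : K -> trop R) n (A : 'M[K]_n)
  (v : 'I_n -> trop R) : 'I_n -> trop R :=
  fun i => \big[tmin/None]_(j < n) tadd (val (A i j)) (v j).

Definition trop_image (K : fieldType) (val : K -> trop R) n (A : 'M[K]_n)
  (S : ('I_n -> trop R) -> Prop) : ('I_n -> trop R) -> Prop :=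
  fun y => tnonzero y /\ exists x, S x /\ proj_eq y (trop_mxv val A x).

End Trop.

Definition weakly_monomial (K : fieldType) n (A : 'M[K]_n) : Prop :=
  forall i j k, A i j != 0 -> A i k != 0 -> j = k.

(* Main.v *)
Require Import Defs.
From HB Require Import structures.
From mathcomp Require Import all_boot all_order all_algebra.
From mathcomp Require Import reals.
From mathcomp Require Import zify ring lra.
Set Implicit Arguments. Unset Strict Implicit. Unset Printing Implicit Defensive.
Import Order.TTheory GRing.Theory Num.Theory.
Local Open Scope ring_scope.


Section Basic.
Variable R : realType.
Variable n : nat.
Local Notation T := (trop R).

Definition terms (mu : {set 'I_n} -> T) (I : {set 'I_n}) (x : 'I_n -> T) :=
  fun i => tadd (circuit_vec mu I i) (x i).
Definition isb r (mu : {set 'I_n} -> T) (B : {set 'I_n}) : bool :=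
  (#|B| == r) && (mu B != None).
Definition cnt (x : 'I_n -> T) (B : {set 'I_n}) : nat := (\sum_(i in B) (x i == None))%N.
Definition sv (x : 'I_n -> T) (B : {set 'I_n}) : R := \sum_(i in B) odflt 0 (x i).
Definition vl (mu : {set 'I_n} -> T) x B : R := odflt 0 (mu B) - sv x B.
Definition opt (P : pred {set 'I_n}) mu x B :=
  P B /\ forall B', P B' -> (cnt x B' <= cnt x B)%N /\
     (cnt x B' = cnt x B -> vl mu x B <= vl mu x B').

Lemma exch_pred (B : {set 'I_n}) e k : e \in B -> k \notin B ->
  forall i, ((i \in (B :\ e) :|: [set k]) && (i != k)) = ((i \in B) && (i != e)).
Proof.
move=> he hk i; rewrite !inE.
case: (eqVneq i k) => [->|hik] /=; first by rewrite (negbTE hk) andbF.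
by rewrite orbF andbT andbC.
Qed.

Lemma sum_exch (F : 'I_n -> R) (B : {set 'I_n}) e k : e \in B -> k \notin B ->
  \sum_(i in (B :\ e) :|: [set k]) F i = \sum_(i in B) F i - F e + F k.
Proof.
move=> he hk.
rewrite (bigD1 k) /=; last by rewrite !inE eqxx orbT.
rewrite [in RHS](bigD1 e) //=.
rewrite (eq_bigl _ _ (exch_pred he hk)).
lra.
Qed.

Lemma cnt_exch (x : 'I_n -> T) (B : {set 'I_n}) e k : e \in B -> k \notin B ->
  (cnt x ((B :\ e) :|: [set k]) + (x e == None) = cnt x B + (x k == None))%N.
Proof.
move=> he hk; rewrite /cnt.
rewrite (bigD1 k) /=; last by rewrite !inE eqxx orbT.
rewrite [in RHS](bigD1 e) //=.
rewrite (eq_bigl _ _ (exch_pred he hk)).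
set s := (\sum_(i in B | i != e) _)%N; lia.
Qed.

Lemma card_exch (B : {set 'I_n}) e k : e \in B -> k \notin B ->
  #|(B :\ e) :|: [set k]| = #|B|.
Proof.
move=> he hk; rewrite setUC cardsU1 !inE negb_and hk orbT /=.
by rewrite [in RHS](cardsD1 e) he.
Qed.


Definition exch r (mu : {set 'I_n} -> T) :=
  forall I J : {set 'I_n}, #|I| = r -> #|J| = r -> forall i, i \in I :\: J ->
    exists2 j, j \in J :\: I &
      tle (tadd (mu ((I :\ i) :|: [set j])) (mu ((J :\ j) :|: [set i])))
          (tadd (mu I) (mu J)).

Lemma opt_same (P : pred {set 'I_n}) mu x B B' : opt P mu x B -> P B' ->
  cnt x B' = cnt x B -> vl mu x B' <= vl mu x B -> opt P mu x B'.
Proof.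
move=> [hPB h] hPB' hc hv; split => // B'' hP''.
have [h1 h2] := h _ hP''; split; first by rewrite hc.
move=> he; have := h2 (etrans he hc) => h3; lra.
Qed.

Lemma opt_exists (P : pred {set 'I_n}) mu x : (exists B, P B) -> exists B, opt P mu x B.
Proof.
case=> B0 hB0.
case: (arg_maxnP (fun B => cnt x B) hB0) => B1 hB1 hmax.
pose Q := fun B => P B && (cnt x B == cnt x B1).
have hQ : Q B1 by rewrite /Q hB1 eqxx.
have hrefl : reflexive (fun a b : R => a <= b) by move=> a; exact: lexx.
have htrans : transitive (fun a b : R => a <= b) by move=> ? ? ?; exact: le_trans.
have htot : total (fun a b : R => a <= b) by move=> a b; exact: le_total.
case: (@extremumP _ _ (fun a b : R => a <= b) B1 Q (vl mu x) hrefl htrans htot hQ) => B2 hQB2 hmin.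
exists B2; move/andP: hQB2 => [hP2 /eqP hc2]; split => // B' hP'.
split; first by rewrite hc2; exact: hmax.
by move=> hc'; apply: hmin; rewrite /Q hP' hc' hc2 eqxx.
Qed.

Lemma crit_suff r mu (x : 'I_n -> T) : exch r mu ->
  (forall e, x e <> None -> exists B, opt (isb r mu) mu x B /\ e \in B) ->
  forall I : {set 'I_n}, #|I| = r.+1 -> min_twice (terms mu I x).
Proof.
move=> hex hL I hI i0; rewrite /terms /circuit_vec.
case hi0: (i0 \in I) => /=; last by case.
case hm: (mu (I :\ i0)) => [m|] /=; last by case.
case hxa: (x i0) => [a|] /=; last by case.
move=> _ hmin.
have [B [[hB hopt] hi0B]] : exists B, opt (isb r mu) mu x B /\ i0 \in B by apply: hL; rewrite hxa.
move/andP: hB => [/eqP hBr]; case hb: (mu B) => [b|] // _.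
have hIr : #|I :\ i0| = r by move: hI; rewrite (cardsD1 i0) hi0 add1n => [[]].
have hin : i0 \in B :\: (I :\ i0) by rewrite !inE eqxx hi0B.
have [k hk hle] := hex B (I :\ i0) hBr hIr i0 hin.
move: hk; rewrite !inE => /andP [hkB /andP [hki0 hkI]].
have hset : ((I :\ i0) :\ k) :|: [set i0] = I :\ k.
  apply/setP => l; rewrite !inE.
  case: (eqVneq l i0) => [->|hl] /=; first by rewrite eq_sym hki0 hi0 orbT.
  by rewrite orbF.
rewrite hset hm hb in hle.
case hb': (mu ((B :\ i0) :|: [set k])) hle => [b'|] //.
case hc: (mu (I :\ k)) => [c|] // hle.
rewrite /= in hle.
have hB'b : isb r mu ((B :\ i0) :|: [set k]) by rewrite /isb card_exch // hBr eqxx hb'.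
have [hc1 hc2] := hopt _ hB'b.
have hcx := cnt_exch x hi0B hkB; rewrite hxa /= in hcx.
case hxk: (x k) => [d|]; rewrite hxk /= in hcx; last by move: hc1 hcx; rewrite addn0 addn1 => h1 h2; rewrite h2 ltnn in h1.
rewrite /= in hcx.
have := hc2 (etrans (esym (addn0 _)) (etrans hcx (addn0 _))); rewrite /vl /sv hb hb' /=.
rewrite (sum_exch (fun i => odflt 0 (x i)) hi0B hkB) hxa hxk /= => hv.
exists k; first by [].
rewrite hkI hc hxk /=; congr Some.
have := hmin k; rewrite hkI hc hxk /= => hle2.
apply/eqP; rewrite eq_le; apply/andP; split; lra.
Qed.


Definition P0 r (mu : {set 'I_n} -> T) (j : 'I_n) : pred {set 'I_n} :=
  fun B => isb r mu B && (j \notin B).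

Lemma crit_nec r mu (x : 'I_n -> T) (j : 'I_n) B :
  (forall I : {set 'I_n}, #|I| = r.+1 -> j \notin I ->
     (exists i, circuit_vec mu I i <> None) -> min_twice (terms mu I x)) ->
  opt (P0 r mu j) mu x B ->
  forall e, e != j -> x e <> None -> exists B', opt (P0 r mu j) mu x B' /\ e \in B'.
Proof.
move=> hI hoptB e hej hxe.
case heB: (e \in B); first by exists B.
have [hPB hopt] := hoptB.
move/andP: (hPB) => [/andP [/eqP hBr hbn] hjB]. case hb: (mu B) hbn => [b|] // _.
case hxa: (x e) hxe => [a|] // _.
pose I := B :|: [set e].
have hIc : #|I| = r.+1 by rewrite /I setUC cardsU1 heB hBr.
have hjI : j \notin I by rewrite !inE negb_or hjB eq_sym hej.
have hIe : I :\ e = B.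
  apply/setP => l; rewrite !inE; case: eqVneq => [->|] /=; first by rewrite heB.
  by rewrite orbF.
have hcirc : exists i, circuit_vec mu I i <> None.
  by exists e; rewrite /circuit_vec !inE eqxx orbT hIe hb.
have hte : terms mu I x e = Some (b + a).
  by rewrite /terms /circuit_vec !inE eqxx orbT hIe hb hxa.
have key : forall l c d, l \in B -> mu (I :\ l) = Some c -> x l = Some d ->
    b + a <= c + d /\ (c + d = b + a -> opt (P0 r mu j) mu x (I :\ l)).
  move=> l c d hl hc hd.
  have hle : l != e by apply/eqP => h; rewrite h heB in hl.
  have hset : I :\ l = (B :\ l) :|: [set e].
    apply/setP => y; rewrite !inE.
    case: (eqVneq y e) => [->|hy] /=; first by rewrite !orbT andbT eq_sym hle.
    by rewrite !orbF.
  have hP' : P0 r mu j (I :\ l).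
    by rewrite /P0 /isb hc hset (card_exch hl (negbT heB)) hBr eqxx /= !inE negb_or negb_and hjB orbT eq_sym hej.
  have hcx := cnt_exch x hl (negbT heB); rewrite hd hxa /= !addn0 in hcx.
  have hv : vl mu x (I :\ l) = c - (sv x B - d + a).
    by rewrite /vl hc /= hset /sv (sum_exch (fun i => odflt 0 (x i)) hl (negbT heB)) hd hxa.
  have [_ h2] := hopt _ hP'.
  have := h2 (etrans (f_equal _ hset) hcx); rewrite hv /vl hb /= => h3.
  split; first by lra.
  move=> hcd; apply: (opt_same hoptB hP'); first by rewrite hset.
  by rewrite hv /vl hb /=; lra.
have hmin : forall l, tle (terms mu I x e) (terms mu I x l).
  move=> l; rewrite hte /terms /circuit_vec.
  case hlI: (l \in I) => //.
  case: (eqVneq l e) => [->|hle]; first by rewrite hIe hb hxa /=.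
  have hl : l \in B by move: hlI; rewrite !inE (negbTE hle) orbF.
  case hc: (mu (I :\ l)) => [c|] //; case hd: (x l) => [d|] //=.
  by have [] := key l c d hl hc hd.
have hne : terms mu I x e <> None by rewrite hte.
have [l hle htl] := hI I hIc hjI hcirc e hne hmin.
move: htl; rewrite hte /terms /circuit_vec.
case hlI: (l \in I) => //.
have hl : l \in B by move: hlI; rewrite !inE (negbTE hle) orbF.
case hc: (mu (I :\ l)) => [c|] //; case hd: (x l) => [d|] //= [hcd].
exists (I :\ l); split; first by have [] := key l c d hl hc hd; auto.
by rewrite !inE eq_sym hle eqxx orbT.
Qed.


Definition upd (z : 'I_n -> T) (j : 'I_n) (t : T) : 'I_n -> T :=
  fun i => if i == j then t else z i.

Lemma cnt_upd z j t B : z j = None ->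
  cnt z B = (cnt (upd z j (Some t)) B + (j \in B))%N.
Proof.
move=> hzj; rewrite /cnt /upd.
case hjB: (j \in B).
  rewrite (bigD1 j hjB) [in RHS](bigD1 j hjB) /= eqxx hzj /=.
  rewrite addn1 add1n; congr S; apply: eq_bigr => i /andP [_ hij].
  by rewrite (negbTE hij).
rewrite addn0; apply: eq_bigr => i hi.
have -> : (i == j) = false by apply/eqP => h; rewrite -h hi in hjB.
by [].
Qed.

Lemma sv_upd z j t B : z j = None ->
  sv (upd z j (Some t)) B = sv z B + (if j \in B then t else 0).
Proof.
move=> hzj; rewrite /sv /upd.
case hjB: (j \in B).
  rewrite (bigD1 j hjB) [in RHS](bigD1 j hjB) /= eqxx hzj /=.
  rewrite add0r addrC; congr (_ + _); apply: eq_bigr => i /andP [_ hij].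
  by rewrite (negbTE hij).
rewrite addr0; apply: eq_bigr => i hi.
have -> : (i == j) = false by apply/eqP => h; rewrite -h hi in hjB.
by [].
Qed.

Lemma isbP r (mu : {set 'I_n} -> T) B : isb r mu B -> #|B| = r /\ exists b, mu B = Some b.
Proof. by move/andP => [/eqP h]; case: (mu B) => [b|] // _; split => //; exists b. Qed.

Lemma lift_pt r mu (z : 'I_n -> T) j :
  exch r mu -> (exists B, P0 r mu j B) -> z j = None ->
  (forall I : {set 'I_n}, #|I| = r.+1 -> j \notin I ->
     (exists i, circuit_vec mu I i <> None) -> min_twice (terms mu I z)) ->
  exists x, (forall i, i != j -> x i = z i) /\
     forall I : {set 'I_n}, #|I| = r.+1 -> min_twice (terms mu I x).
Proof.
move=> hex hne hzj hz.
have [B0 hB0] := opt_exists mu z hne.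
have [hPB0 hopt0] := hB0.
move/andP: (hPB0) => [hisb0 hjB0].
have [hB0r [b0 hb0]] := isbP hisb0.
pose P1 := fun B => isb r mu B && (j \in B).
have [[B1 hB1 hgt] | hle] : (exists2 B1, opt P1 mu z B1 & cnt z B0 < cnt z B1)%N \/
    (forall B, P1 B -> cnt z B <= cnt z B0)%N.
  case: (boolP [exists B, P1 B]) => [/existsP hex1 | hnex].
    have [B1 hB1] := opt_exists mu z hex1.
    case: (leqP (cnt z B1) (cnt z B0)) => h.
      by right => B hB; apply: leq_trans h; exact: (hB1.2 B hB).1.
    by left; exists B1.
  by right => B hB; exfalso; move/existsP: hnex; apply; exists B.
-
  have [hPB1 hopt1] := hB1.
  move/andP: (hPB1) => [hisb1 hjB1].
  have [hB1r [b1 hb1]] := isbP hisb1.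
  have c3 : cnt z B1 = (cnt z B0).+1.
    have hin : j \in B1 :\: B0 by rewrite !inE hjB1 hjB0.
    have [k hk hle'] := hex B1 B0 hB1r hB0r j hin.
    move: hk; rewrite !inE => /andP [hkB1 hkB0].
    rewrite hb1 hb0 in hle'.
    case hp: (mu ((B1 :\ j) :|: [set k])) hle' => [p|] // _.
    have hkj : k != j by apply/eqP => h; move: hjB0; rewrite -h hkB0.
    have hP0' : P0 r mu j ((B1 :\ j) :|: [set k]).
      rewrite /P0 /isb (card_exch hjB1 hkB1) hB1r eqxx hp !inE eqxx /=.
      by rewrite eq_sym hkj.
    have hcx := cnt_exch z hjB1 hkB1; rewrite hzj /= in hcx.
    have := (hopt0 _ hP0').1; move: hcx hgt.
    case: (z k == None) => /=; rewrite ?addn0 ?addn1 => hcx hgt h;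
      set u := cnt z B1 in hcx hgt *; set v := cnt z B0 in hgt h *;
      set w := cnt z _ in hcx h; lia.
  pose t := vl mu z B1 - vl mu z B0.
  pose x := upd z j (Some t).
  have hcntx : forall B, cnt z B = (cnt x B + (j \in B))%N.
    by move=> B; exact: cnt_upd.
  have hvlx : forall B, vl mu x B = vl mu z B - (if j \in B then t else 0).
    by move=> B; rewrite /vl (sv_upd t B hzj) opprD addrA.
  have e0 := hcntx B0; rewrite (negbTE hjB0) /= addn0 in e0.
  have e11 := hcntx B1; rewrite hjB1 /= addn1 in e11.
  have hoptx0 : opt (isb r mu) mu x B0.
    split => // B hB.
    case hjB: (j \in B).
    - have hP1 : P1 B by rewrite /P1 hB hjB.
      have [h1 h2] := hopt1 _ hP1.
      have e1 := hcntx B; rewrite hjB /= addn1 in e1.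
      split; first by lia.
      move=> hc; have := h2 (ltac:(lia)).
      rewrite !hvlx hjB (negbTE hjB0) /t; lra.
    - have hP0B : P0 r mu j B by rewrite /P0 hB hjB.
      have [h1 h2] := hopt0 _ hP0B.
      have e1 := hcntx B; rewrite hjB /= addn0 in e1.
      split; first by lia.
      move=> hc; have := h2 (ltac:(lia)).
      rewrite !hvlx hjB (negbTE hjB0); lra.
  have hoptx1 : opt (isb r mu) mu x B1.
    apply: (opt_same hoptx0 hisb1); first by lia.
    rewrite !hvlx hjB1 (negbTE hjB0) /t; lra.
  exists x; split; first by move=> i hij; rewrite /x /upd (negbTE hij).
  apply: (crit_suff hex) => e hxe.
  case: (eqVneq e j) => [->|hej]; first by exists B1.
  have hze : z e <> None by move: hxe; rewrite /x /upd (negbTE hej).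
  have [Be [hBe heBe]] := crit_nec hz hB0 hej hze.
  exists Be; split => //.
  have [hPBe hoptBe] := hBe.
  move/andP: (hPBe) => [hisbe hjBe].
  have c1 : cnt z Be = cnt z B0.
    apply/eqP; rewrite eqn_leq (hopt0 _ hPBe).1 (hoptBe _ hPB0).1 //.
  have e2 := hcntx Be; rewrite (negbTE hjBe) /= addn0 in e2.
  apply: (opt_same hoptx0 hisbe); first by lia.
  rewrite !hvlx (negbTE hjBe) (negbTE hjB0) !subr0.
  exact: ((hoptBe _ hPB0).2 (esym c1)).
-
  exists z; split => //; apply: (crit_suff hex) => e hze.
  have hej : e != j by apply/eqP => h; rewrite h hzj in hze.
  have [Be [hBe heBe]] := crit_nec hz hB0 hej hze.
  have hex0 : exists B, isb r mu B by exists B0.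
  have [G hG] := opt_exists mu z hex0.
  have [hPBe hoptBe] := hBe.
  move/andP: (hPBe) => [hisbe hjBe].
  have [hBer [be hbe]] := isbP hisbe.
  have [hPG hoptG] := hG.
  have [hGr [g hg]] := isbP hPG.
  have c1 : cnt z Be = cnt z B0.
    apply/eqP; rewrite eqn_leq (hopt0 _ hPBe).1 (hoptBe _ hPB0).1 //.
  have c2 : cnt z G = cnt z Be.
    apply/eqP; rewrite eqn_leq (hoptG _ hisbe).1 c1 andbT.
    case hjG: (j \in G).
      by apply: hle; rewrite /P1 hPG hjG.
    have hP0G : P0 r mu j G by rewrite /P0 hPG hjG.
    exact: (hopt0 G hP0G).1.
  case heG: (e \in G); first by exists G.
  have hin : e \in Be :\: G by rewrite !inE heG heBe.
  have [k hk hle'] := hex Be G hBer hGr e hin.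
  move: hk; rewrite !inE => /andP [hkBe hkG].
  rewrite hbe hg in hle'.
  case hp: (mu ((Be :\ e) :|: [set k])) hle' => [p|] //.
  case hq: (mu ((G :\ k) :|: [set e])) => [q|] // hle'.
  rewrite /= in hle'.
  have hisbe' : isb r mu ((Be :\ e) :|: [set k]) by rewrite /isb (card_exch heBe hkBe) hBer eqxx hp.
  have hisbg' : isb r mu ((G :\ k) :|: [set e]) by rewrite /isb (card_exch hkG (negbT heG)) hGr eqxx hq.
  have hcx := cnt_exch z heBe hkBe.
  case hzk: (z k) => [dk|]; rewrite hzk in hcx; last first.
    exfalso; have := (hoptG _ hisbe').1; move: hcx.
    case: (z e) hze => // ? _ /=; rewrite addn0 addn1 => ->; rewrite c2 ltnn //.
  case hze': (z e) hze hcx => [a|] // _ /=; rewrite !addn0 => hcx.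
  have hkj : k != j by apply/eqP => h; rewrite h hzj in hzk.
  have hP0e' : P0 r mu j ((Be :\ e) :|: [set k]).
    by rewrite /P0 hisbe' !inE negb_or negb_and hjBe orbT eq_sym hkj.
  have h3 := (hoptBe _ hP0e').2 hcx.
  have hcg := cnt_exch z hkG (negbT heG); rewrite hzk hze' /= !addn0 in hcg.
  exists ((G :\ k) :|: [set e]); split; last by rewrite !inE eqxx orbT.
  apply: (opt_same hG hisbg'); first by [].
  move: h3; rewrite /vl hbe hp hg hq /sv /=.
  rewrite (sum_exch (fun i => odflt 0 (z i)) heBe hkBe).
  rewrite (sum_exch (fun i => odflt 0 (z i)) hkG (negbT heG)) hze' hzk /=.
  move=> h3; lra.
Qed.

End Basic.


Section Del.
Variable R : realType.
Variable n : nat.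
Local Notation T := (trop R).

Lemma tle_None (a : T) : tle a None.
Proof. by case: a. Qed.

Lemma tadd_None_r (a : T) : tadd a None = None.
Proof. by case: a. Qed.

Lemma min_twice_ext (v w : 'I_n -> T) : (forall i, v i = w i) -> min_twice v -> min_twice w.
Proof.
move=> h hv i hi hmin.
have hi' : v i <> None by rewrite h.
have hmin' : forall j, tle (v i) (v j) by move=> j; rewrite !h.
have [j hj hji] := hv i hi' hmin'.
by exists j => //; rewrite -!h.
Qed.

Lemma card_diff (I J : {set 'I_n}) i : #|I| = #|J| -> i \in I :\: J -> exists j, j \in J :\: I.
Proof.
move=> hc hi.
have : (0 < #|J :\: I|)%N.
  rewrite cardsD setIC -hc -cardsD; apply/card_gt0P; by exists i.
by move/card_gt0P => [j hj]; exists j.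
Qed.

Lemma setU1D1 (A : {set 'I_n}) i j : i != j -> (A :|: [set j]) :\ i = (A :\ i) :|: [set j].
Proof.
move=> hij; apply/setP => l; rewrite !inE.
case: (eqVneq l j) => [->|hl] /=; first by rewrite !orbT andbT eq_sym hij.
by rewrite !orbF.
Qed.

Lemma setD1U1 (A : {set 'I_n}) j : j \in A -> (A :\ j) :|: [set j] = A.
Proof. by move=> h; rewrite setUC setD1K. Qed.

Lemma setU1D (A : {set 'I_n}) j : j \notin A -> (A :|: [set j]) :\ j = A.
Proof. by move=> h; rewrite setUC setU1K. Qed.

Lemma cardU1s (A : {set 'I_n}) j : j \notin A -> #|A :|: [set j]| = #|A|.+1.
Proof. by move=> h; rewrite setUC cardsU1 h. Qed.

Lemma cardD1s (A : {set 'I_n}) j : j \in A -> #|A| = #|A :\ j|.+1.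
Proof. by move=> h; rewrite (cardsD1 j A) h. Qed.


Lemma vm_exch r (mu : {set 'I_n} -> T) : valuated_matroid r mu -> exch r mu.
Proof. by case. Qed.

Lemma upd_nonzero (z : 'I_n -> T) j t : tnonzero z -> z j = None -> tnonzero (upd z j t).
Proof.
move=> [i hi] hzj; exists i; rewrite /upd; case: eqVneq => [hij|//].
by rewrite hij hzj in hi.
Qed.

Lemma del_nc r (mu : {set 'I_n} -> T) (j : 'I_n) B0 : valuated_matroid r mu ->
  isb r mu B0 -> j \notin B0 ->
  let mu' := fun B : {set 'I_n} => if j \in B then None else mu B in
  valuated_matroid r mu' /\
   (forall B : {set 'I_n}, j \in B -> mu' B = None) /\
   (forall B : {set 'I_n}, mu' B <> None -> exists2 B' : {set 'I_n}, mu B' <> None & B \subset B') /\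
   (forall z, tnonzero z -> (trop_closure r mu' z <-> z j = None /\ exists t, trop_closure r mu (upd z j t))).
Proof.
move=> hmu hisb0 hjB0 mu'.
have hex := vm_exch hmu.
have [hB0r [b0 hb0]] := isbP hisb0.
split; [split|split; [|split]].
- by exists B0; rewrite /mu' (negbTE hjB0) hb0.
- move=> I J hI hJ i hi.
  have [j' hj'] := card_diff (etrans hI (esym hJ)) hi.
  case hjI: (j \in I); first by exists j' => //; rewrite /mu' hjI /=; exact: tle_None.
  case hjJ: (j \in J); first by exists j' => //; rewrite /mu' hjJ tadd_None_r; exact: tle_None.
  have [k hk hle] := hex I J hI hJ i hi.
  exists k => //.
  move: hk hi; rewrite !inE => /andP [hkI hkJ] /andP [hiJ hiI].
  have hjk : (j == k) = false by apply/eqP => h; rewrite h hkJ in hjJ.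
  have hji : (j == i) = false by apply/eqP => h; rewrite h hiI in hjI.
  rewrite /mu' hjI hjJ.
  have -> : (j \in (I :\ i) :|: [set k]) = false by rewrite !inE hjI hjk andbF.
  have -> : (j \in (J :\ k) :|: [set i]) = false by rewrite !inE hjJ hji andbF.
  exact: hle.
- by move=> B hjB; rewrite /mu' hjB.
- move=> B; rewrite /mu'; case: (j \in B) => // h; by exists B.
- move=> z hz; split.
  + move=> [_ hc].
    have hzj : z j = None.
      case hzj: (z j) => [a|] //; exfalso.
      pose I := B0 :|: [set j].
      have hIc : #|I| = r.+1 by rewrite /I cardU1s // hB0r.
      have hjI : j \in I by rewrite !inE eqxx orbT.
      have hIj : I :\ j = B0 by rewrite /I setU1D.
      have hcv : exists i, circuit_vec mu' I i <> None.
        by exists j; rewrite /circuit_vec hjI hIj /mu' (negbTE hjB0) hb0.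
      have hne : terms mu' I z j <> None.
        by rewrite /terms /circuit_vec hjI hIj /mu' (negbTE hjB0) hb0 hzj.
      have hoth : forall l, l != j -> terms mu' I z l = None.
        move=> l hl; rewrite /terms /circuit_vec; case: (l \in I) => //.
        by rewrite /mu' !inE eq_sym hl eqxx orbT.
      have hmin : forall l, tle (terms mu' I z j) (terms mu' I z l).
        move=> l; case: (eqVneq l j) => [->|hl]; last by rewrite (hoth l hl); exact: tle_None.
        by case: (terms mu' I z j) => //= v; exact: lexx.
      have [l hl hlj] := hc I hIc hcv j hne hmin.
      by apply: hne; have := hoth l hl; rewrite /terms hlj.
    split => //.
    have hz' : forall I : {set 'I_n}, #|I| = r.+1 -> j \notin I ->
        (exists i, circuit_vec mu I i <> None) -> min_twice (terms mu I z).
      move=> I hI hjI hcv.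
      have eqcv : forall i, circuit_vec mu' I i = circuit_vec mu I i.
        move=> i; rewrite /circuit_vec /mu'; case hiI: (i \in I) => //.
        by rewrite !inE (negbTE hjI) andbF.
      have hcv' : exists i, circuit_vec mu' I i <> None.
        by case: hcv => i hi; exists i; rewrite eqcv.
      by apply: (min_twice_ext _ (hc I hI hcv')) => i; rewrite /terms eqcv.
    have [x [hxz hx]] := lift_pt hex (ex_intro _ B0 (introT andP (conj hisb0 hjB0))) hzj hz'.
    exists (x j); split; first exact: upd_nonzero.
    move=> I hI _; apply: (min_twice_ext _ (hx I hI)) => i.
    rewrite /terms /upd; case: eqVneq => [->|hij] //.
    by rewrite hxz.
  + move=> [hzj [t [_ ht]]]; split => // I hI hcv.
    case hjI: (j \in I).
    * move=> i0 hi0; exfalso; apply: hi0; rewrite /terms /circuit_vec.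
      case: (eqVneq i0 j) => [->|hij]; first by rewrite hzj tadd_None_r.
      case: (i0 \in I) => //.
      by rewrite /mu' !inE eq_sym hij hjI.
    * have eqcv : forall i, circuit_vec mu' I i = circuit_vec mu I i.
        move=> i; rewrite /circuit_vec /mu'; case hiI: (i \in I) => //.
        by rewrite !inE hjI andbF.
      have hcv' : exists i, circuit_vec mu I i <> None.
        by case: hcv => i hi; exists i; rewrite -eqcv.
      apply: (min_twice_ext _ (ht I hI hcv')) => i.
      rewrite /terms eqcv /upd; case: eqVneq => [->|] //.
      by rewrite /circuit_vec hjI.
Qed.


Lemma del_c r (mu : {set 'I_n} -> T) (j : 'I_n) : valuated_matroid r mu ->
  (forall B, isb r mu B -> j \in B) ->
  let mu' := fun B : {set 'I_n} => if j \in B then None else mu (B :|: [set j]) in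
  valuated_matroid r.-1 mu' /\
   (forall B : {set 'I_n}, j \in B -> mu' B = None) /\
   (forall B : {set 'I_n}, mu' B <> None -> exists2 B' : {set 'I_n}, mu B' <> None & B \subset B') /\
   (forall z, tnonzero z -> (trop_closure r.-1 mu' z <-> z j = None /\ exists t, trop_closure r mu (upd z j t))).
Proof.
move=> hmu hcol mu'.
have hex := vm_exch hmu.
have [B0 [hB0r hb0n]] := hmu.1.
have hisb0 : isb r mu B0 by rewrite /isb hB0r eqxx; apply/eqP.
have hjB0 := hcol _ hisb0.
have hr : r = r.-1.+1 by rewrite -hB0r (cardD1s hjB0).
have hnb : forall B : {set 'I_n}, #|B| = r -> j \notin B -> mu B = None.
  move=> B hB hjB; case hb: (mu B) => [b|] //.
  have : isb r mu B by rewrite /isb hB eqxx hb.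
  by move/hcol; rewrite (negbTE hjB).
have hjD : forall A : {set 'I_n}, j \notin A :\ j by move=> A; rewrite !inE eqxx.
split; [split|split; [|split]].
- exists (B0 :\ j); split; first by move: hB0r; rewrite (cardD1s hjB0) => <-.
  by rewrite /mu' (negbTE (hjD B0)) setD1U1.
- move=> I J hI hJ i hi.
  have [j' hj'] := card_diff (etrans hI (esym hJ)) hi.
  case hjI: (j \in I); first by exists j' => //; rewrite /mu' hjI /=; exact: tle_None.
  case hjJ: (j \in J); first by exists j' => //; rewrite /mu' hjJ tadd_None_r; exact: tle_None.
  move: (hi); rewrite !inE => /andP [hiJ hiI].
  have hij : i != j by apply/eqP => h; rewrite h hjI in hiI.
  have hI1 : #|I :|: [set j]| = r by rewrite cardU1s ?hjI // hI -hr.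
  have hJ1 : #|J :|: [set j]| = r by rewrite cardU1s ?hjJ // hJ -hr.
  have hi1 : i \in (I :|: [set j]) :\: (J :|: [set j]).
    by rewrite !inE hiI (negbTE hiJ) (negbTE hij).
  have [k hk hle] := hex _ _ hI1 hJ1 i hi1.
  move: hk; rewrite !inE negb_or => /andP [/andP [hkI hkj] hkJ].
  rewrite (negbTE hkj) orbF in hkJ.
  exists k; first by rewrite !inE hkI hkJ.
  have e1 : ((I :|: [set j]) :\ i) :|: [set k] = ((I :\ i) :|: [set k]) :|: [set j].
    by rewrite setU1D1 // setUAC.
  have e2 : ((J :|: [set j]) :\ k) :|: [set i] = ((J :\ k) :|: [set i]) :|: [set j].
    by rewrite setU1D1 // setUAC.
  rewrite e1 e2 in hle.
  rewrite /mu' hjI hjJ.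
  have -> : (j \in (I :\ i) :|: [set k]) = false.
    by rewrite !inE hjI andbF /= eq_sym (negbTE hkj).
  have -> : (j \in (J :\ k) :|: [set i]) = false.
    by rewrite !inE hjJ andbF /= eq_sym (negbTE hij).
  exact: hle.
- by move=> B hjB; rewrite /mu' hjB.
- move=> B; rewrite /mu'; case: (j \in B) => // h; exists (B :|: [set j]) => //.
  exact: subsetUl.
- move=> z hz; split.
  + move=> [_ hc].
    have hzj : z j = None.
      case hzj: (z j) => [a|] //; exfalso.
      have hIc : #|B0| = r.-1.+1 by rewrite -hr.
      have hcv : exists i, circuit_vec mu' B0 i <> None.
        by exists j; rewrite /circuit_vec hjB0 /mu' (negbTE (hjD B0)) setD1U1.
      have hne : terms mu' B0 z j <> None.
        rewrite /terms /circuit_vec hjB0 /mu' (negbTE (hjD B0)) setD1U1 //.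
        move: hb0n hzj; case: (mu B0) => [b|] // _; case: (z j) => [c _ //|] hh; discriminate hh.
      have hoth : forall l, l != j -> terms mu' B0 z l = None.
        move=> l hl; rewrite /terms /circuit_vec; case: (l \in B0) => //.
        by rewrite /mu' !inE eq_sym hl hjB0.
      have hmin : forall l, tle (terms mu' B0 z j) (terms mu' B0 z l).
        move=> l; case: (eqVneq l j) => [->|hl]; last by rewrite (hoth l hl); exact: tle_None.
        by case: (terms mu' B0 z j) => //= v; exact: lexx.
      have [l hl hlj] := hc B0 hIc hcv j hne hmin.
      by apply: hne; have := hoth l hl; rewrite /terms hlj.
    split => //; exists None; split; first exact: upd_nonzero.
    move=> I hI hcv.
    case hjI: (j \in I); last first.
      move=> i0 hi0; exfalso; apply: hi0; rewrite /circuit_vec.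
      case hi0I: (i0 \in I) => //.
      rewrite hnb //; last by rewrite !inE hjI andbF.
      by move: hI; rewrite (cardD1s hi0I) => [[]].
    have hI' : #|I :\ j| = r.-1.+1 by rewrite -hr; move: hI; rewrite (cardD1s hjI) => [[]].
    have eqcv : forall i, i != j -> circuit_vec mu' (I :\ j) i = circuit_vec mu I i.
      move=> i hij; rewrite /circuit_vec !inE hij /=.
      case: (i \in I) => //.
      rewrite /mu' !inE eqxx andbF /=.
      by rewrite -setU1D1 // setD1U1.
    have hcv' : exists i, circuit_vec mu' (I :\ j) i <> None.
      case: hcv => i hi; case: (eqVneq i j) => [hij|hij].
        exfalso; apply: hi; rewrite hij /circuit_vec hjI hnb ?hjD //.
        by move: hI; rewrite (cardD1s hjI) => [[]].
      by exists i; rewrite eqcv.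
    apply: (min_twice_ext _ (hc _ hI' hcv')) => i.
    case: (eqVneq i j) => [->|hij].
      by rewrite /upd eqxx tadd_None_r /circuit_vec (negbTE (hjD I)).
    by rewrite eqcv // /upd (negbTE hij).
  + move=> [hzj [t [_ ht]]]; split => // I' hI' hcv.
    case hjI: (j \in I').
    * move=> i0 hi0; exfalso; apply: hi0; rewrite /circuit_vec.
      case: (eqVneq i0 j) => [->|hij]; first by rewrite hzj tadd_None_r.
      case: (i0 \in I') => //.
      by rewrite /mu' !inE eq_sym hij hjI.
    * pose I := I' :|: [set j].
      have hI : #|I| = r.+1 by rewrite /I cardU1s ?hjI // hI' -hr.
      have eqcv : forall i, i != j -> circuit_vec mu' I' i = circuit_vec mu I i.
        move=> i hij; rewrite /circuit_vec /I !inE (negbTE hij) orbF.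
        case: (i \in I') => //.
        rewrite /mu' !inE hjI andbF /=.
        by rewrite setU1D1.
      have hcv' : exists i, circuit_vec mu I i <> None.
        case: hcv => i hi; case: (eqVneq i j) => [hij|hij].
          by exfalso; apply: hi; rewrite hij /circuit_vec hjI.
        by exists i; rewrite -eqcv.
      apply: (min_twice_ext _ (ht I hI hcv')) => i.
      case: (eqVneq i j) => [->|hij].
        have hjI1 : j \in I by rewrite /I !inE eqxx orbT.
        have hIj : I :\ j = I' by rewrite /I setU1D ?hjI.
        rewrite /circuit_vec /= hjI hjI1 hIj hnb ?hjI //.
        by rewrite hI' -hr.
      by rewrite eqcv // /upd (negbTE hij).
Qed.


Lemma del r (mu : {set 'I_n} -> T) (j : 'I_n) : valuated_matroid r mu ->
  exists r' (mu' : {set 'I_n} -> T), valuated_matroid r' mu' /\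
   (forall B : {set 'I_n}, j \in B -> mu' B = None) /\
   (forall B : {set 'I_n}, mu' B <> None -> exists2 B' : {set 'I_n}, mu B' <> None & B \subset B') /\
   (forall z, tnonzero z -> (trop_closure r' mu' z <-> z j = None /\ exists t, trop_closure r mu (upd z j t))).
Proof.
move=> hmu.
case: (boolP [exists B, isb r mu B && (j \notin B)]) => [/existsP [B0 /andP [h1 h2]] | hn].
  by eexists _, _; exact: (del_nc hmu h1 h2).
have hcol : forall B, isb r mu B -> j \in B.
  move=> B hB; apply/negPn/negP => hjB; move/existsP: hn; apply; exists B.
  by rewrite hB hjB.
by eexists _, _; exact: (del_c hmu hcol).
Qed.

Lemma tc_ext r (mu : {set 'I_n} -> T) (x y : 'I_n -> T) :
  (forall i, x i = y i) -> trop_closure r mu x -> trop_closure r mu y.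
Proof.
move=> H [[i hi] h]; split; first by exists i; rewrite -H.
move=> I hI hcv; apply: (min_twice_ext _ (h I hI hcv)) => l; by rewrite H.
Qed.

Lemma dels r (mu : {set 'I_n} -> T) (s : seq 'I_n) : valuated_matroid r mu ->
  exists r' (mu' : {set 'I_n} -> T), valuated_matroid r' mu' /\
   (forall B : {set 'I_n}, forall e, e \in s -> e \in B -> mu' B = None) /\
   (forall z, tnonzero z -> (trop_closure r' mu' z <->
      (forall e, e \in s -> z e = None) /\
      exists x, trop_closure r mu x /\ forall e, e \notin s -> x e = z e)).
Proof.
move=> hmu; elim: s => [|a s [r1 [mu1 [hv1 [hl1 he1]]]]].
  exists r, mu; split => //; split => // z hz; split.
    by move=> h; split => //; exists z.
  by move=> [_ [x [hx hxz]]]; apply: (tc_ext _ hx) => e; exact: hxz.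
have [r2 [mu2 [hv2 [hl2 [hs2 he2]]]]] := del a hv1.
exists r2, mu2; split => //; split.
  move=> B e; rewrite inE => /orP [/eqP -> | hes] heB; first exact: hl2.
  case hb: (mu2 B) => [b|] //.
  have hbn : mu2 B <> None by rewrite hb.
  have [B' hB' hsub] := hs2 B hbn.
  by exfalso; apply: hB'; apply: (hl1 B' e hes); apply: (subsetP hsub).
move=> z hz; rewrite he2 //; split.
  move=> [hza [t htc]].
  have [hw1 [x [hx hxw]]] := (he1 _ htc.1).1 htc.
  split.
    move=> e; rewrite inE => /orP [/eqP -> //| hes].
    by have := hw1 e hes; rewrite /upd; case: eqVneq => [->|].
  exists x; split => // e; rewrite inE negb_or => /andP [hea hes].
  by rewrite hxw // /upd (negbTE hea).
move=> [hz0 [x [hx hxz]]].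
have hza : z a = None by apply: hz0; rewrite inE eqxx.
split => //; exists (if a \in s then None else x a).
apply/(he1 _ (upd_nonzero _ hz hza)); split.
  move=> e hes; rewrite /upd; case: (eqVneq e a) => [hea|hea] /=; first by rewrite -hea hes.
  by apply: hz0; rewrite inE hes orbT.
exists x; split => // e hes; rewrite /upd; case: (eqVneq e a) => [hea|hea] /=.
  by rewrite hea in hes; rewrite (negbTE hes) hea.
by apply: hxz; rewrite inE negb_or hea hes.
Qed.

End Del.


Section Mono.
Variable R : realType.
Local Notation T := (trop R).

Lemma tminA : associative (@tmin R).
Proof. by case=> [a|] [b|] [c|] //=; rewrite minA. Qed.
Lemma tminC : commutative (@tmin R).
Proof. by case=> [a|] [b|] //=; rewrite minC. Qed.
Lemma tmin0 : left_id None (@tmin R).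
Proof. by case. Qed.

HB.instance Definition _ := Monoid.isComLaw.Build (trop R) None (@tmin R) tminA tminC tmin0.

Lemma big_tmin1 n (F : 'I_n -> T) k : (forall j, j != k -> F j = None) ->
  \big[@tmin R/None]_(j < n) F j = F k.
Proof.
move=> h; rewrite (bigD1 k) //= big1; first by case: (F k).
by move=> j /h.
Qed.

Lemma big_tmin0 n (F : 'I_n -> T) : (forall j, F j = None) ->
  \big[@tmin R/None]_(j < n) F j = None.
Proof. by move=> h; rewrite big1. Qed.

End Mono.

Section Opt.
Variable R : realType.
Local Notation T := (trop R).

Lemma taddSS (u v : R) (M Z : T) :
  tadd (tadd (Some u) M) (tadd (Some v) Z) = tadd (Some (u + v)) (tadd M Z).
Proof. by case: M => [m|]; case: Z => [w|] //=; congr Some; lra. Qed.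

Lemma tadd_cancel (C : R) (u v : T) : tadd (Some C) u = tadd (Some C) v -> u = v.
Proof. by case: u => [x|]; case: v => [y|] //= [h]; congr Some; lra. Qed.

Lemma tle_cancel (C : R) (u v : T) : tle (tadd (Some C) u) (tadd (Some C) v) -> tle u v.
Proof. by case: u => [x|]; case: v => [y|] //= h; lra. Qed.

Lemma tle_shift (C : R) (u v : T) : tle u v -> tle (tadd (Some C) u) (tadd (Some C) v).
Proof. by case: u => [x|]; case: v => [y|] //= h; lra. Qed.

Lemma tle_total (u v : T) : tle u v \/ tle v u.
Proof. by case: u => [x|]; case: v => [y|] /=; auto; case/orP: (le_total x y); auto. Qed.

Lemma tle_refl (u : T) : tle u u.
Proof. by case: u => //= x; exact: lexx. Qed.

Lemma tadd0 (u : T) : tadd (Some 0) u = u.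
Proof. by case: u => //= x; rewrite add0r. Qed.

Lemma tadd_SS (u v : R) (w : T) : tadd (Some u) (tadd (Some v) w) = tadd (Some (u + v)) w.
Proof. by case: w => //= x; congr Some; lra. Qed.

Lemma mt_transfer n (v w : 'I_n -> T) (I : {set 'I_n}) (f : 'I_n -> 'I_n) (C : R) :
  {in I &, injective f} -> (forall i, i \notin I -> v i = None) ->
  (forall e, e \notin f @: I -> w e = None) ->
  (forall i, i \in I -> v i = tadd (Some C) (w (f i))) ->
  (min_twice v <-> min_twice w).
Proof.
move=> hinj hvI hwI hvw; split.
- move=> hv e0 he0 hmin.
  have : e0 \in f @: I by apply/negPn/negP => h; apply: he0; exact: hwI.
  case/imsetP => i0 hi0 he0'; subst e0.
  have hvi0 := hvw i0 hi0.
  have hne : v i0 <> None by rewrite hvi0; case: (w (f i0)) he0.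
  have hmin' : forall l, tle (v i0) (v l).
    move=> l; case hl: (l \in I).
      by rewrite hvi0 (hvw l hl); apply: tle_shift; exact: hmin.
    by rewrite (hvI l) ?hl //; exact: tle_None.
  have [l hl hvl] := hv i0 hne hmin'.
  have hlI : l \in I.
    by apply/negPn/negP => h; apply: hne; rewrite -hvl hvI.
  exists (f l).
    by apply/eqP => h; move/eqP: hl; apply; exact: hinj.
  by apply: (@tadd_cancel C); rewrite -hvw // -hvw.
- move=> hw i0 hi0 hmin.
  have hi0I : i0 \in I by apply/negPn/negP => h; apply: hi0; exact: hvI.
  have hvi0 := hvw i0 hi0I.
  have hne : w (f i0) <> None by move=> h; apply: hi0; rewrite hvi0 h.
  have hmin' : forall e, tle (w (f i0)) (w e).
    move=> e; case he: (e \in f @: I).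
      case/imsetP: he => l hl ->; apply: (@tle_cancel C); rewrite -hvw // -hvw //.
    by rewrite (hwI e) ?he //; exact: tle_None.
  have [e he hwe] := hw (f i0) hne hmin'.
  have : e \in f @: I by apply/negPn/negP => h; apply: hne; rewrite -hwe hwI.
  case/imsetP => l hl hel; subst e.
  exists l; first by apply/eqP => h; move: he; rewrite h eqxx.
  by rewrite hvw // hwe -hvi0.
Qed.

End Opt.

Section Lone.
Variables (R : realType) (n : nat).
Local Notation T := (trop R).

Lemma lone r (nu : {set 'I_n} -> T) y (B : {set 'I_n}) i : trop_closure r nu y ->
  #|B| = r -> nu B <> None -> i \notin B ->
  (forall l, l \in B -> nu ((B :|: [set i]) :\ l) = None) -> y i = None.
Proof.
move=> [_ hc] hB hnB hiB hl.
case hyi: (y i) => [w|] //; exfalso.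
pose I := B :|: [set i].
have hiI : i \in I by rewrite !inE eqxx orbT.
have hIc : #|I| = r.+1 by rewrite /I cardU1s // hB.
have hIi : I :\ i = B by rewrite /I setU1D.
have hcv : exists l, circuit_vec nu I l <> None by exists i; rewrite /circuit_vec hiI hIi.
have hne : tadd (circuit_vec nu I i) (y i) <> None.
  by rewrite /circuit_vec hiI hIi hyi; case: (nu B) hnB.
have hoth : forall l, l != i -> tadd (circuit_vec nu I l) (y l) = None.
  move=> l hli; rewrite /circuit_vec; case hlI: (l \in I) => //.
  have hlB : l \in B by move: hlI; rewrite !inE (negbTE hli) orbF.
  by rewrite hl.
have hmin : forall l, tle (tadd (circuit_vec nu I i) (y i)) (tadd (circuit_vec nu I l) (y l)).
  move=> l; case: (eqVneq l i) => [->|hli]; first exact: tle_refl.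
  by rewrite (hoth l hli); exact: tle_None.
have [l hli hl'] := hc I hIc hcv i hne hmin.
by apply: hne; rewrite -hl' hoth.
Qed.

Lemma ltwo r (nu : {set 'I_n} -> T) y (I : {set 'I_n}) p q : trop_closure r nu y ->
  #|I| = r.+1 -> p \in I -> q \in I -> p != q ->
  (forall l, l \in I -> l != p -> l != q -> nu (I :\ l) = None) ->
  nu (I :\ p) <> None ->
  tadd (nu (I :\ p)) (y p) = tadd (nu (I :\ q)) (y q).
Proof.
move=> [_ hc] hI hp hq hpq hl hnp.
pose v := fun i => tadd (circuit_vec nu I i) (y i).
have hcv : exists l, circuit_vec nu I l <> None by exists p; rewrite /circuit_vec hp.
have hmt := hc I hI hcv.
have hvp : v p = tadd (nu (I :\ p)) (y p) by rewrite /v /circuit_vec hp.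
have hvq : v q = tadd (nu (I :\ q)) (y q) by rewrite /v /circuit_vec hq.
have hoth : forall l, l != p -> l != q -> v l = None.
  move=> l h1 h2; rewrite /v /circuit_vec; case hlI: (l \in I) => //.
  by rewrite hl.
have aux : forall u w, (forall l, l != u -> l != w -> v l = None) -> u != w ->
    tle (v u) (v w) -> v u = v w.
  move=> u w hot huw hle.
  case hvu: (v u) => [x|]; last by move: hle; rewrite hvu; case: (v w).
  have hne : v u <> None by rewrite hvu.
  have hmin : forall l, tle (v u) (v l).
    move=> l; case: (eqVneq l u) => [->|hlu]; first exact: tle_refl.
    case: (eqVneq l w) => [->//|hlw].
    by rewrite (hot l hlu hlw); exact: tle_None.
  have [l hlu hl0] := hmt u hne hmin.
  have hl' : v l = v u := hl0.
  rewrite -hvu -hl'; case: (eqVneq l w) => [->//|hlw].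
  by exfalso; apply: hne; rewrite -hl' (hot l hlu hlw).
rewrite -hvp -hvq.
case: (tle_total (v p) (v q)) => h.
  by apply: aux => // l h1 h2; exact: hoth.
symmetry; apply: aux => //; last by rewrite eq_sym.
by move=> l h1 h2; exact: hoth.
Qed.

End Lone.

Section Nu.
Variables (R : realType) (n k : nat) (mu1 : {set 'I_n} -> trop R) (D : {set 'I_n}).
Variables (sg : 'I_n -> 'I_n) (a : 'I_n -> R).
Local Notation T := (trop R).

Definition good (B : {set 'I_n}) := (B \subset D) && (#|sg @: B| == #|B|).
Definition nu (B : {set 'I_n}) : T :=
  if good B then tadd (Some (\sum_(i in B) a i)) (mu1 (sg @: B)) else None.
Definition tau (e : 'I_n) : 'I_n := odflt e [pick i in D | sg i == e].

Lemma tauP e : e \in sg @: D -> tau e \in D /\ sg (tau e) = e.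
Proof.
case/imsetP => i hi ->; rewrite /tau; case: pickP => [i' /andP [h1 /eqP h2] | h] //=.
by have := h i; rewrite hi eqxx.
Qed.

Lemma good_inj (B : {set 'I_n}) : good B -> {in B &, injective sg}.
Proof. by move/andP => [_ /imset_injP]. Qed.

Lemma good_sub (B B' : {set 'I_n}) : good B -> B' \subset B -> good B'.
Proof.
move=> hB hsub; move/andP: (hB) => [hD _]; rewrite /good (subset_trans hsub hD) /=.
apply/imset_injP => x y hx hy; apply: (good_inj hB); exact: (subsetP hsub).
Qed.

Lemma goodP (B : {set 'I_n}) : B \subset D -> {in B &, injective sg} -> good B.
Proof. by move=> h1 h2; rewrite /good h1; apply/imset_injP. Qed.

Lemma imsetD1_inj (B : {set 'I_n}) i : {in B &, injective sg} -> i \in B ->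
  sg @: (B :\ i) = (sg @: B) :\ sg i.
Proof.
move=> hinj hi; apply/setP => e; rewrite !inE.
apply/imsetP/andP => [[l hl ->]|[hne /imsetP [l hl hel]]].
  move: hl; rewrite !inE => /andP [hli hl]; split; last exact: imset_f.
  by apply/eqP => h; move/eqP: hli; apply; exact: hinj.
exists l => //; rewrite !inE hl andbT.
by apply/eqP => h; move: hne; rewrite hel h eqxx.
Qed.

Lemma imset_D1U1 (B : {set 'I_n}) i : i \in B -> sg @: B = (sg @: (B :\ i)) :|: [set sg i].
Proof. by move=> hi; rewrite -{1}(setD1U1 hi) imsetU imset_set1. Qed.

Lemma key_terms (I : {set 'I_n}) (y z : 'I_n -> T) (c : R) : good I ->
  (forall i, i \in I -> y i = tadd (Some (c + a i)) (z (sg i))) ->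
  forall i, i \in I -> terms nu I y i =
     tadd (Some (c + \sum_(l in I) a l)) (terms mu1 (sg @: I) z (sg i)).
Proof.
move=> hg hy i hi.
have hg' : good (I :\ i) by apply: (good_sub hg); exact: subsetDl.
rewrite /terms /circuit_vec hi (imset_f sg hi) /nu hg' (imsetD1_inj (good_inj hg) hi).
have hs : \sum_(l in I) a l = a i + \sum_(l in I :\ i) a l by rewrite (big_setD1 i hi).
rewrite hy // taddSS hs; congr (tadd (Some _) _); lra.
Qed.


Lemma good_card (B : {set 'I_n}) : B \subset D -> #|sg @: B| = #|B| -> good B.
Proof. by rewrite /good => -> ->; rewrite eqxx. Qed.

Lemma good_cardE (B : {set 'I_n}) : good B -> #|sg @: B| = #|B|.
Proof. by move/andP => [_ /eqP]. Qed.

Lemma good_D (B : {set 'I_n}) : good B -> B \subset D.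
Proof. by move/andP => []. Qed.

Lemma lift_set (B' : {set 'I_n}) : B' \subset sg @: D ->
  good (tau @: B') /\ sg @: (tau @: B') = B' /\ #|tau @: B'| = #|B'|.
Proof.
move=> hsub.
have htau : forall e, e \in B' -> tau e \in D /\ sg (tau e) = e.
  by move=> e he; apply: tauP; exact: (subsetP hsub).
have hinj : {in B' &, injective tau}.
  move=> x y hx hy h; by rewrite -(htau x hx).2 -(htau y hy).2 h.
have hc : #|tau @: B'| = #|B'| by apply: card_in_imset.
have hs : sg @: (tau @: B') = B'.
  rewrite -imset_comp (eq_in_imset (g := id)) ?imset_id //.
  by move=> e he /=; rewrite (htau e he).2.
split; last by [].
apply: good_card; last by rewrite hs hc.
by apply/subsetP => x /imsetP [e he ->]; exact: (htau e he).1.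
Qed.

Lemma nu_vm : valuated_matroid k mu1 ->
  (forall B, mu1 B <> None -> B \subset sg @: D) -> valuated_matroid k nu.
Proof.
move=> hv1 hloop; split.
  have [B' [hB'k hB'n]] := hv1.1.
  have [hg [hs hc]] := lift_set (hloop _ hB'n).
  exists (tau @: B'); split; first by rewrite hc.
  by rewrite /nu hg hs; case: (mu1 B') hB'n.
have hex := vm_exch hv1.
move=> I J hI hJ i hi.
have [j' hj'] := card_diff (etrans hI (esym hJ)) hi.
have tN : forall u : T, tadd None u = None by [].
case hgI: (good I); last by exists j' => //; rewrite {3}/nu hgI tN; exact: tle_None.
case hgJ: (good J); last by exists j' => //; rewrite {4}/nu hgJ tadd_None_r; exact: tle_None.
case hmI: (mu1 (sg @: I)) => [p|]; last by exists j' => //; rewrite {3}/nu hgI hmI tadd_None_r tN; exact: tle_None.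
case hmJ: (mu1 (sg @: J)) => [q|]; last by exists j' => //; rewrite {4}/nu hgJ hmJ !tadd_None_r; exact: tle_None.
have hnuI : nu I = Some (\sum_(l in I) a l + p) by rewrite /nu hgI hmI.
have hnuJ : nu J = Some (\sum_(l in J) a l + q) by rewrite /nu hgJ hmJ.
rewrite hnuI hnuJ.
move: (hi); rewrite inE => /andP [hiJ hiI].
have hID := good_D hgI; have hJD := good_D hgJ.
have hinI := good_inj hgI; have hinJ := good_inj hgJ.
case hsJ: (sg i \in sg @: J).
- case/imsetP: hsJ => j0 hj0 hsg.
  have hj0I : j0 \notin I.
    by apply/negP => h; have := hinI _ _ hiI h hsg => hij; move: hiJ; rewrite hij hj0.
  exists j0; first by rewrite inE hj0I hj0.
  have hsI' : sg @: ((I :\ i) :|: [set j0]) = sg @: I.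
    by rewrite imsetU imset_set1 -hsg -imset_D1U1.
  have hsJ' : sg @: ((J :\ j0) :|: [set i]) = sg @: J.
    by rewrite imsetU imset_set1 hsg -imset_D1U1.
  have hgI' : good ((I :\ i) :|: [set j0]).
    apply: good_card; last by rewrite hsI' (good_cardE hgI) card_exch.
    rewrite subUset sub1set (subsetP hJD _ hj0) andbT.
    by apply: subset_trans hID; exact: subsetDl.
  have hgJ' : good ((J :\ j0) :|: [set i]).
    apply: good_card; last by rewrite hsJ' (good_cardE hgJ) card_exch.
    rewrite subUset sub1set (subsetP hID _ hiI) andbT.
    by apply: subset_trans hJD; exact: subsetDl.
  rewrite /nu hgI' hgJ' hsI' hsJ' hmI hmJ /=.
  rewrite (sum_exch a hiI hj0I) (sum_exch a hj0 hiJ); lra.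
- have hsI : sg i \in sg @: I :\: sg @: J by rewrite inE hsJ (imset_f sg hiI).
  have hcI : #|sg @: I| = k by rewrite (good_cardE hgI).
  have hcJ : #|sg @: J| = k by rewrite (good_cardE hgJ).
  have [s hs hle] := hex _ _ hcI hcJ (sg i) hsI.
  move: hs; rewrite inE => /andP [hsI' hsJ'].
  case/imsetP: hsJ' => j hj hsj.
  have hjI : j \notin I by apply/negP => h; move: hsI'; rewrite hsj (imset_f sg h).
  exists j; first by rewrite inE hjI hj.
  have eI : sg @: ((I :\ i) :|: [set j]) = ((sg @: I) :\ sg i) :|: [set s].
    by rewrite imsetU imset_set1 imsetD1_inj // hsj.
  have eJ : sg @: ((J :\ j) :|: [set i]) = ((sg @: J) :\ s) :|: [set sg i].
    by rewrite imsetU imset_set1 imsetD1_inj // hsj.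
  have hgI' : good ((I :\ i) :|: [set j]).
    apply: good_card.
      rewrite subUset sub1set (subsetP hJD _ hj) andbT.
      by apply: subset_trans hID; exact: subsetDl.
    by rewrite eI card_exch ?(imset_f sg hiI) // (good_cardE hgI) card_exch.
  have hgJ' : good ((J :\ j) :|: [set i]).
    apply: good_card.
      rewrite subUset sub1set (subsetP hID _ hiI) andbT.
      by apply: subset_trans hJD; exact: subsetDl.
    by rewrite eJ card_exch ?hsj ?(imset_f sg hj) ?hsJ // (good_cardE hgJ) card_exch.
  rewrite hmI hmJ -eI -eJ in hle.
  rewrite /nu hgI' hgJ'.
  case hp: (mu1 (sg @: ((I :\ i) :|: [set j]))) hle => [p'|] //.
  case hq: (mu1 (sg @: ((J :\ j) :|: [set i]))) => [q'|] //= hle.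
  rewrite (sum_exch a hiI hjI) (sum_exch a hj hiJ); lra.
Qed.


Lemma tN (u : T) : tadd None u = None.
Proof. by []. Qed.

Lemma absorb1 (A : {set 'I_n}) x : x \in A -> A :|: [set x] = A.
Proof. by move=> h; apply/setUidPl; rewrite sub1set. Qed.

Lemma nu_tc_of (y z : 'I_n -> T) (c : R) : trop_closure k mu1 z -> tnonzero y ->
  (forall i, y i = if i \in D then tadd (Some (c + a i)) (z (sg i)) else None) ->
  trop_closure k nu y.
Proof.
move=> [_ hz] hy0 hy; split => // I hI hcv i0 hi0 hmin.
have hi0I : i0 \in I.
  by apply/negPn/negP => h; apply: hi0; rewrite /circuit_vec (negbTE h).
have hg0 : good (I :\ i0).
  by apply/negPn/negP => h; apply: hi0; rewrite /circuit_vec hi0I /nu (negbTE h).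
have hD0 : i0 \in D.
  by apply/negPn/negP => h; apply: hi0; rewrite hy (negbTE h) tadd_None_r.
have hID : I \subset D.
  by rewrite -(setD1U1 hi0I) subUset sub1set hD0 (good_D hg0).
have hyI : forall i, i \in I -> y i = tadd (Some (c + a i)) (z (sg i)).
  by move=> i hi; rewrite hy (subsetP hID _ hi).
have hcI : #|I| = #|I :\ i0|.+1 by rewrite (cardD1s hi0I).
case hsg: (sg i0 \in sg @: (I :\ i0)).
- case/imsetP: (hsg) => i1 hi1 he.
  move: (hi1); rewrite !inE => /andP [hi10 hi1I].
  exists i1 => //.
  have e1 : sg @: (I :\ i0) = sg @: I by rewrite [in RHS](imset_D1U1 hi0I) absorb1.
  have hi0' : i0 \in I :\ i1 by rewrite !inE eq_sym hi10 hi0I.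
  have e2 : sg @: (I :\ i1) = sg @: I.
    by rewrite [in RHS](imset_D1U1 hi1I) absorb1 // -he (imset_f sg hi0').
  have hc1 : #|I| = #|I :\ i1|.+1 by rewrite (cardD1s hi1I).
  have hg1 : good (I :\ i1).
    apply: good_card; first by apply: subset_trans hID; exact: subsetDl.
    rewrite e2 -e1 (good_cardE hg0); apply/eq_add_S; by rewrite -hc1 -hcI.
  have hs0 : \sum_(l in I) a l = a i0 + \sum_(l in I :\ i0) a l by rewrite (big_setD1 i0 hi0I).
  have hs1 : \sum_(l in I) a l = a i1 + \sum_(l in I :\ i1) a l by rewrite (big_setD1 i1 hi1I).
  rewrite /circuit_vec hi0I hi1I /nu hg0 hg1 e1 e2 (hyI _ hi0I) (hyI _ hi1I) -he !taddSS.
  congr (tadd (Some _) _); lra.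
- have hg : good I.
    apply: good_card => //.
    by rewrite (imset_D1U1 hi0I) cardU1s ?hsg // (good_cardE hg0) hcI.
  have hm0 : mu1 (sg @: (I :\ i0)) <> None.
    by move=> h; apply: hi0; rewrite /circuit_vec hi0I /nu hg0 h tadd_None_r tN.
  have hw : min_twice (terms mu1 (sg @: I) z).
    apply: hz; first by rewrite (good_cardE hg).
    exists (sg i0); rewrite /circuit_vec (imset_f sg hi0I).
    by rewrite -(imsetD1_inj (good_inj hg) hi0I).
  have hvI : forall i, i \notin I -> tadd (circuit_vec nu I i) (y i) = None.
    by move=> i hi; rewrite /circuit_vec (negbTE hi).
  have hwI : forall e, e \notin sg @: I -> terms mu1 (sg @: I) z e = None.
    by move=> e he; rewrite /terms /circuit_vec (negbTE he).
  have hvw : forall i, i \in I -> tadd (circuit_vec nu I i) (y i) =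
      tadd (Some (c + \sum_(l in I) a l)) (terms mu1 (sg @: I) z (sg i)).
    by move=> i hi; exact: (key_terms hg hyI hi).
  have H := mt_transfer (good_inj hg) hvI hwI hvw.
  exact: (H.2 hw i0 hi0 hmin).
Qed.



Lemma tshift_eq (u v u' v' : R) (Y1 Y2 : T) : tadd (Some u) Y1 = tadd (Some v) Y2 ->
  u' - v' = u - v -> tadd (Some u') Y1 = tadd (Some v') Y2.
Proof. by case: Y1 => [x|]; case: Y2 => [w|] //= [h] h2; congr Some; lra. Qed.

Lemma nu_tc_to (y : 'I_n -> T) : valuated_matroid k mu1 ->
  (forall B, mu1 B <> None -> B \subset sg @: D) -> trop_closure k nu y ->
  exists z, trop_closure k mu1 z /\
    forall i, y i = if i \in D then tadd (Some (0 + a i)) (z (sg i)) else None.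
Proof.
move=> hv1 hloop hy.
have hvn := nu_vm hv1 hloop.
have [B0 [hB0k hB0n]] := hvn.1.
have loopy : forall i, (forall B : {set 'I_n}, #|B| = k -> i \in B -> nu B = None) -> y i = None.
  move=> i hi.
  have hiB0 : i \notin B0 by apply/negP => h; apply: hB0n; exact: hi.
  apply: (lone hy hB0k hB0n hiB0) => l hl.
  have hlI : l \in B0 :|: [set i] by rewrite inE hl.
  have hli : i != l by apply/eqP => h; rewrite h hl in hiB0.
  apply: hi; last by rewrite !inE eqxx orbT andbT.
  by move: (cardD1s hlI); rewrite cardU1s // hB0k => [[]].
have hnD : forall i, i \notin D -> y i = None.
  move=> i hi; apply: loopy => B _ hiB; rewrite /nu.
  case hg: (good B) => //; exfalso; move: hi.
  by rewrite (subsetP (good_D hg) _ hiB).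
pose z := fun e => if e \in sg @: D then tadd (Some (- a (tau e))) (y (tau e)) else None.
have hrel : forall i, i \in D -> y i = tadd (Some (a i)) (z (sg i)).
  move=> i hiD.
  have hsD : sg i \in sg @: D := imset_f sg hiD.
  have [htD htsg] := tauP hsD.
  suff E : tadd (Some (- a i)) (y i) = tadd (Some (- a (tau (sg i)))) (y (tau (sg i))).
    by rewrite /z hsD -E tadd_SS subrr tadd0.
  set i' := tau (sg i) in htD htsg *.
  case: (eqVneq i' i) => [->//|hne].
  case: (boolP [exists B', isb k mu1 B' && (sg i \in B')]) => [/existsP [B' /andP [hB' hsB']] | hno];
    last first.
    have hl : forall j, sg j = sg i -> forall B : {set 'I_n}, #|B| = k -> j \in B -> nu B = None.
      move=> j hj B hB hjB; rewrite /nu; case hg: (good B) => //.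
      case hm: (mu1 (sg @: B)) => [m|] //; exfalso.
      move/existsP: hno; apply; exists (sg @: B).
      by rewrite /isb (good_cardE hg) hB eqxx hm /= -hj (imset_f sg hjB).
    by rewrite (loopy i (hl i erefl)) (loopy i' (hl i' htsg)).
  have [hB'k [m hm]] := isbP hB'.
  have hB'sub : B' \subset sg @: D by apply: hloop; rewrite hm.
  have hB1sub : B' :\ sg i \subset sg @: D by apply: subset_trans hB'sub; exact: subsetDl.
  have [hgt [hst hct]] := lift_set hB1sub.
  set Bt := tau @: (B' :\ sg i) in hgt hst hct.
  have hnotin : forall j, sg j = sg i -> j \notin Bt.
    move=> j hj; apply/negP => h; have := imset_f sg h; rewrite hst hj !inE eqxx //.
  have hiBt := hnotin i erefl.
  have hi'Bt := hnotin i' htsg.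
  pose B := Bt :|: [set i].
  have hi'B : i' \notin B by rewrite !inE negb_or hi'Bt hne.
  pose I := B :|: [set i'].
  have hBk : #|B| = k.
    by rewrite /B cardU1s // hct; move: hB'k; rewrite (cardD1s hsB').
  have hIk : #|I| = k.+1 by rewrite /I cardU1s // hBk.
  have hsgB : sg @: B = B' by rewrite /B imsetU imset_set1 hst setD1U1.
  have hBD : B \subset D by rewrite subUset sub1set hiD (good_D hgt).
  have hgB : good B by apply: good_card => //; rewrite hsgB hB'k hBk.
  have hnuB : nu B = Some (\sum_(l in B) a l + m) by rewrite /nu hgB hsgB hm.
  have hiB : i \in B by rewrite !inE eqxx orbT.
  have hsgB2 : sg @: ((B :\ i) :|: [set i']) = B'.
    by rewrite imsetU imset_set1 (imsetD1_inj (good_inj hgB) hiB) hsgB htsg setD1U1.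
  have hB2D : (B :\ i) :|: [set i'] \subset D.
    rewrite subUset sub1set htD andbT.
    by apply: subset_trans hBD; exact: subsetDl.
  have hgB2 : good ((B :\ i) :|: [set i']).
    by apply: good_card => //; rewrite hsgB2 card_exch // hB'k hBk.
  have hnuB2 : nu ((B :\ i) :|: [set i']) = Some (\sum_(l in B) a l - a i + a i' + m).
    by rewrite /nu hgB2 hsgB2 hm (sum_exch a hiB hi'B).
  have hIi' : I :\ i' = B by rewrite /I setU1D.
  have hIi : I :\ i = (B :\ i) :|: [set i'] by rewrite /I setU1D1 // eq_sym.
  have hpI : i' \in I by rewrite !inE eqxx orbT.
  have hqI : i \in I by rewrite !inE eqxx orbT.
  have hoth : forall l, l \in I -> l != i' -> l != i -> nu (I :\ l) = None.
    move=> l hl h1 h2; rewrite /nu; case hg: (good (I :\ l)) => //; exfalso.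
    have hi1 : i \in I :\ l by rewrite in_setD1 eq_sym h2 hqI.
    have hi2 : i' \in I :\ l by rewrite in_setD1 eq_sym h1 hpI.
    have := good_inj hg hi1 hi2 (esym htsg) => h.
    by move: hne; rewrite h eqxx.
  have hnp : nu (I :\ i') <> None by rewrite hIi' hnuB.
  have E := ltwo hy hIk hpI hqI hne hoth hnp.
  rewrite hIi' hIi hnuB hnuB2 in E.
  symmetry; apply: (tshift_eq E); lra.
have hyz : forall i, y i = if i \in D then tadd (Some (0 + a i)) (z (sg i)) else None.
  move=> i; case: ifP => h; first by rewrite add0r hrel.
  exact: hnD (negbT h).
exists z; split => //.
split.
  have [i hi] := hy.1.
  have hiD : i \in D by apply/negPn/negP => h; apply: hi; exact: hnD.
  by exists (sg i) => h; apply: hi; rewrite hrel // h.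
move=> I' hI' hcv'.
case hsub: (I' \subset sg @: D); last first.
  have [e0 he0I he0] : exists2 e0, e0 \in I' & e0 \notin sg @: D.
    by apply/subsetPn; rewrite hsub.
  move=> i0 hi0 _; exfalso; apply: hi0.
  rewrite /circuit_vec; case hi0I: (i0 \in I') => //.
  case: (eqVneq i0 e0) => [->|hne]; first by rewrite /z (negbTE he0) tadd_None_r.
  case hm: (mu1 (I' :\ i0)) => [m|] //; exfalso.
  have hmn : mu1 (I' :\ i0) <> None by rewrite hm.
  have := subsetP (hloop _ hmn) e0; rewrite !inE eq_sym hne he0I (negbTE he0).
  by move=> /(_ isT).
have [hgt [hst hct]] := lift_set hsub.
set Bt := tau @: I' in hgt hst hct.
have hBtD := good_D hgt.
have hyI : forall i, i \in Bt -> y i = tadd (Some (0 + a i)) (z (sg i)).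
  by move=> i hi; rewrite hyz (subsetP hBtD _ hi).
have hBtk : #|Bt| = k.+1 by rewrite hct.
have hcvB : exists i, circuit_vec nu Bt i <> None.
  case: hcv' => e he.
  have heI : e \in I' by apply/negPn/negP => h; apply: he; rewrite /circuit_vec (negbTE h).
  have [_ hte] := tauP (subsetP hsub _ heI).
  have htB : tau e \in Bt := imset_f tau heI.
  exists (tau e); rewrite /circuit_vec htB /nu.
  have hg' : good (Bt :\ tau e) by apply: (good_sub hgt); exact: subsetDl.
  rewrite hg' (imsetD1_inj (good_inj hgt) htB) hst hte.
  by move: he; rewrite /circuit_vec heI; case: (mu1 (I' :\ e)).
have hv := hy.2 Bt hBtk hcvB.
have hvI : forall i, i \notin Bt -> tadd (circuit_vec nu Bt i) (y i) = None.
  by move=> i hi; rewrite /circuit_vec (negbTE hi).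
have hwI : forall e, e \notin sg @: Bt -> terms mu1 (sg @: Bt) z e = None.
  by move=> e he; rewrite /terms /circuit_vec (negbTE he).
have hvw : forall i, i \in Bt -> tadd (circuit_vec nu Bt i) (y i) =
    tadd (Some (0 + \sum_(l in Bt) a l)) (terms mu1 (sg @: Bt) z (sg i)).
  by move=> i hi; exact: (key_terms hgt hyI hi).
have H := mt_transfer (good_inj hgt) hvI hwI hvw.
by have := H.1 hv; rewrite hst.
Qed.

End Nu.



Theorem corollary2p25 (R : realType) (K : fieldType) (val : K -> trop R)
  (hval : nonarch_valuation val) (n r : nat) (mu : {set 'I_n} -> trop R)
  (hmu : valuated_matroid r mu) (A : 'M[K]_n) (hA : weakly_monomial A) :
  tropical_linear_space (trop_image val A (trop_closure r mu)).
Proof.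
have [hv0 _ _] := hval.
pose D := [set i | [exists j, A i j != 0]].
pose sg := fun i => odflt i [pick j | A i j != 0].
pose a := fun i => odflt 0 (val (A i (sg i))).
have hsg : forall i, i \in D -> A i (sg i) != 0 /\ forall j, A i j != 0 -> j = sg i.
  move=> i; rewrite inE => /existsP [j hj]; rewrite /sg.
  case: pickP => [j' hj' | h] /=; last by have := h j; rewrite hj.
  by split => // l hl; apply: hA hl hj'.
have hnD : forall i j, i \notin D -> A i j = 0.
  move=> i j hi; apply/eqP/negPn/negP => h; move: hi; rewrite inE.
  by move/existsP; apply; exists j.
have hval0 : val 0 = None by apply/hv0.
have ha : forall i, i \in D -> val (A i (sg i)) = Some (a i).
  move=> i hi; rewrite /a; case hv: (val (A i (sg i))) => [v|] //.
  by move/hv0: hv => h; move: (hsg i hi).1; rewrite h eqxx.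
have mxv : forall x i, trop_mxv val A x i =
    if i \in D then tadd (Some (a i)) (x (sg i)) else None.
  move=> x i; rewrite /trop_mxv; case: ifP => hi.
    rewrite (big_tmin1 (k := sg i)) ?ha //.
    move=> j hj; have -> : A i j = 0.
      by apply/eqP/negPn/negP => h; move: hj; rewrite ((hsg i hi).2 j h) eqxx.
    by rewrite hval0.
  by apply: big_tmin0 => j; rewrite hnD ?hi // hval0.
pose s := enum [set e | e \notin sg @: D].
have hs : forall e, (e \in s) = (e \notin sg @: D) by move=> e; rewrite mem_enum inE.
have [r1 [mu1 [hv1 [hl1 he1]]]] := dels s hmu.
have hloop : forall B, mu1 B <> None -> B \subset sg @: D.
  move=> B hB; apply/subsetP => e he; apply/negPn/negP => hn; apply: hB.
  by apply: (hl1 B e) => //; rewrite hs.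
exists r1, (nu mu1 D sg a); split; first exact: nu_vm hv1 hloop.
move=> y hy; split.
- move=> [_ [x [hx [c hc]]]].
  pose z := fun e => if e \in sg @: D then x e else None.
  have hzs : forall i, i \in D -> z (sg i) = x (sg i).
    by move=> i hi; rewrite /z (imset_f sg hi).
  have hz0 : tnonzero z.
    have [i hi] := hy; move: hi; rewrite hc mxv.
    case: ifP => hiD; last by [].
    move=> h; exists (sg i); rewrite hzs // => h'; apply: h; by rewrite h' tadd_None_r.
  have hz : trop_closure r1 mu1 z.
    apply/(he1 z hz0); split.
      by move=> e; rewrite hs /z => /negbTE ->.
    exists x; split => // e; rewrite hs negbK /z => ->.
    by [].
  apply: (nu_tc_of (c := c) hz hy) => i.
  rewrite hc mxv; case: ifP => hiD; last by [].
  by rewrite hzs // tadd_SS.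
- move=> htc.
  have [z [hz hyz]] := nu_tc_to hv1 hloop htc.
  have [hzs [x [hx hxz]]] := (he1 z hz.1).1 hz.
  split => //; exists x; split => //; exists 0 => i.
  rewrite hyz mxv; case: ifP => hiD; last by [].
  rewrite tadd_SS hxz // hs negbK.
  exact: imset_f.
Qed.
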